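(* Let $F$ be a Ferrers diagram of semiperimeter $n+1$, $T\in\mathsf{EWtab}(F)$ and $(a_1,\ldots,a_n)\in\mathbb{Z}^n$. Then $(T,(a_1,\ldots,a_n))\in\mathsf{Rec}_{\mathsf{EW}}(F)$ if and only if $(\Psi(T),(a_1,\ldots,a_n))$ is a canonical decorated permutation.
   Context: Ferrers diagrams and graphs: a Ferrers diagram $F$ (English convention) of semiperimeter $n+1$ has rows and columns labeled by $0,\ldots,n$: the $n+1$ unit steps of its south-east boundary path, traversed from top-right to bottom-left, are labeled $0,\ldots,n$; a vertical step labels the row it bounds, a horizontal step the column it bounds (top row labeled $0$). $\mathsf{rows}(F)$, $\mathsf{cols}(F)$ are the label sets; $F$ has a cell in row $i$, column $j$ iff $i<j$. $G(F)$ has vertex set $\{0,\ldots,n\}$ with edges $\{i,j\}$ for $i\in\mathsf{rows}(F)$, $j\in\mathsf{cols}(F)$, $i<j$. Sandpile model on $G(F)$ with sink $0$: configurations $c\in\mathbb{N}^n$; non-sink $v$ unstable if $c_v\ge\deg(v)$; toppling sends one grain to each neighbour (grains to $0$ disappear); toppling the sink adds one grain to each neighbour of $0$. Recurrent: stable configurations obtainable from $c_v=\deg(v)-1$ by adding grains and stabilizing; $\mathsf{Rec}(G)$ their set; $\mathsf{Rec}^{\mathsf{min}}(G)$: recurrent configurations of minimal total grain count. Canonical toppling of a recurrent $c$: topple the sink ($U^{(0)}_c=\{0\}$), then alternately topple simultaneously all unstable vertices in $\mathsf{cols}(F)$ ($V^{(1)}_c$), all unstable in $\mathsf{rows}(F)$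 ($U^{(1)}_c$), etc.; $\mathsf{CanonTop}(c)=(U^{(0)}_c,V^{(1)}_c,U^{(1)}_c,\ldots)$ is an ordered partition of $\{0,\ldots,n\}$. For $c\in\mathsf{Rec}(G(F))$, $\mathsf{minrec}(c)$ is the configuration $m$ with $m_j=|\{\ell\in V^{(k)}_c: j<\ell,\ k>i\}|$ if $j\in U^{(i)}_c$ and $m_j=|\{\ell\in U^{(k)}_c: j>\ell,\ k\ge i\}|$ if $j\in V^{(i)}_c$. EW-tableaux: $0/1$-fillings $T$ of $F$ with top row all 1s, a 0 in every other row, and no rectangle with 0s in two diagonally opposite corners and 1s in the other two; $\mathsf{EWtab}(F)$ is their set. $\phi_{TC}(T)$ is the configuration with $c_i$ = number of 1s in row $i$ ($i\in\mathsf{rows}(F)$), $c_i$ = number of 0s in column $i$ ($i\in\mathsf{cols}(F)$); $\phi_{TC}$ is a bijection $\mathsf{EWtab}(F)\to\mathsf{Rec}^{\mathsf{min}}(G(F))$ with inverse $\phi_{CT}$. $\mathsf{CanonTop}(T):=\mathsf{CanonTop}(\phi_{TC}(T))=(U^{(0)}_T,V^{(1)}_T,U^{(1)}_T,\ldots)$. $\Psi(T)$ is the permutation of $[n]$ given by the word $\mathsf{inc}(V^{(1)}_T)\,\mathsf{dec}(U^{(1)}_T)\,\mathsf{inc}(V^{(2)}_T)\cdots$ (inc/dec = increasing/decreasing listing). A decorated EW-tableau is a pair $(T,(x_1,\ldots,x_n))$ with $T\in\mathsf{EWtab}(F)$, $0\le x_i<$ (number of 0s in row $i$ of $T$) for $i\in\mathsf{rows}(F)$,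 $0\le x_i<$ (number of 1s in column $i$ of $T$) for $i\in\mathsf{cols}(F)$. Define $\psi(x)=(\phi_{CT}(\mathsf{minrec}(x)),x-\mathsf{minrec}(x))$ for $x\in\mathsf{Rec}(G(F))$ and $\mathsf{Rec}_{\mathsf{EW}}(F)=\psi(\mathsf{Rec}(G(F)))$. Permutations: for a permutation $\pi=\pi_1\cdots\pi_n$ of $[n]$, $\pi_i$ is an ascent top if $i=1$ or $\pi_{i-1}<\pi_i$, a descent bottom if $\pi_{i-1}>\pi_i$. $\mathsf{RunDec}(\pi)=(D^{(0)}_\pi,A^{(1)}_\pi,D^{(1)}_\pi,A^{(2)}_\pi,\ldots)$ with $D^{(0)}_\pi=\{0\}$ followed by the letter sets of the maximal factors of $\pi$ consisting alternately of ascent tops ($A$-blocks) and descent bottoms ($D$-blocks). A (stable) decorated permutation is $(\pi,(a_1,\ldots,a_n))$ with $0\le a_i<|\{j\in A^{(k)}_\pi: j>i,\ k\le\ell\}|$ if $i\in D^{(\ell)}_\pi$ and $0\le a_i<|\{j\in D^{(k)}_\pi: j<i,\ k<\ell\}|$ if $i\in A^{(\ell)}_\pi$. It is canonical if moreover $a_i<\mu_i(\pi)$ for all $i$, where $\mu_i(\pi)=|\{j\in A^{(\ell)}_\pi: j>i\}|$ if $i\in D^{(\ell)}_\pi$ and $\mu_i(\pi)=|\{j\in D^{(\ell-1)}_\pi: j<i\}|$ if $i\in A^{(\ell)}_\pi$. *)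

(* Defs.v *)
From mathcomp Require Import all_boot all_order all_algebra.
Set Implicit Arguments. Unset Strict Implicit. Unset Printing Implicit Defensive.
Import GRing.Theory Num.Theory.

(* A Ferrers diagram of semiperimeter n+1 is encoded by the set R of labels
   of its rows (subset of {0,...,n}); columns are the complement.  The
   boundary path starts with a vertical step (row 0) and ends with a
   horizontal one (column n). *)
Definition ferrers (n : nat) (R : {set 'I_n.+1}) : bool :=
  (ord0 \in R) && (ord_max \notin R).

(* 0/1 fillings: functions on 'I_n.+1 * 'I_n.+1; entry (i,j) = cell in row i,
   column j; EW-tableaux are required to be false outside the cells of F. *)
Definition tab (n : nat) := {ffun 'I_n.+1 * 'I_n.+1 -> bool}.

(* configurations: functions nat -> nat, only values at 1..n are meaningful *)
Definition conf := nat -> nat.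

Inductive reach (step : conf -> conf -> Prop) : conf -> conf -> Prop :=
| reach_refl c : reach step c c
| reach_step c d e : step c d -> reach step d e -> reach step c e.

Section Ferrers.
Variables (n : nat) (R : {set 'I_n.+1}).

Definition isR (i : nat) : bool := (i < n.+1) && (inord i \in R).
Definition isC (i : nat) : bool := (i < n.+1) && (inord i \notin R).
Definition cell (i j : nat) : bool := [&& isR i, isC j & i < j].

Definition adj (i j : nat) : bool := cell i j || cell j i.
Definition deg (v : nat) : nat := count (adj v) (iota 0 n.+1).

Definition nonsink (v : nat) : bool := (1 <= v) && (v <= n).
Definition conf_eq (c d : conf) : Prop := forall v, nonsink v -> c v = d v.

Definition stable (c : conf) : Prop := forall v, nonsink v -> c v < deg v.
Definition add_grain (v : nat) (c : conf) : conf :=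
  fun u => if u == v then (c u).+1 else c u.
Definition topple (v : nat) (c : conf) : conf :=
  fun u => if u == v then c u - deg v
           else if nonsink u && adj v u then (c u).+1 else c u.
Definition sp_step (c d : conf) : Prop :=
  (exists2 v, nonsink v & d = add_grain v c) \/
  (exists v, [/\ nonsink v, deg v <= c v & d = topple v c]).
Definition cmax : conf := fun v => (deg v).-1.

Definition Rec (c : conf) : Prop :=
  stable c /\ exists2 d, reach sp_step cmax d & conf_eq d c.

(* canonical toppling: phase 0 topples the sink; phase p >= 1 topples
   simultaneously all unstable non-sink vertices that are columns (p odd) or
   rows (p even). *)
Definition inS (d : conf) (p v : nat) : bool :=
  [&& nonsink v, (if odd p then isC v else isR v) & deg v <= d v].

Fixpoint cfg (c : conf) (p : nat) : conf :=
  match p with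
  | 0 => fun u => c u + adj 0 u
  | p'.+1 => let d := cfg c p' in
      fun u => d u - (if inS d p u then deg u else 0)
               + count (fun v => inS d p v && adj v u) (iota 1 n)
  end.

(* level of a vertex in CanonTop(c) = (U0, V1, U1, V2, U2, ...):
   U^(0) has level 0, V^(k) has level 2k-1, U^(k) has level 2k. *)
Definition lev (c : conf) (v : nat) : nat :=
  if v == 0 then 0
  else (find (fun p => inS (cfg c p) p.+1 v) (iota 0 (2 * n + 2))).+1.

Definition minrec (c : conf) : conf := fun j =>
  if odd (lev c j) then
    count (fun l => ~~ odd (lev c l) && (lev c j < lev c l) && (l < j)) (iota 0 n.+1)
  else
    count (fun l => odd (lev c l) && (lev c j < lev c l) && (j < l)) (iota 0 n.+1).

Definition ent (T : tab n) (i j : nat) : bool := T (inord i, inord j).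

Definition EWtab (T : tab n) : bool :=
  [&& [forall i : 'I_n.+1, forall j : 'I_n.+1, ~~ cell i j ==> ~~ T (i, j)],
      [forall j : 'I_n.+1, cell 0 j ==> T (ord0, j)],
      [forall i : 'I_n.+1, (isR i && (i != 0 :> nat)) ==>
          [exists j : 'I_n.+1, cell i j && ~~ T (i, j)]] &
      [forall r1 : 'I_n.+1, forall r2 : 'I_n.+1, forall c1 : 'I_n.+1,
        forall c2 : 'I_n.+1,
        [&& isR r1, isR r2, isC c1, isC c2, r1 < r2, c1 < c2 & r2 < c1] ==>
        ~~ ([&& ~~ T (r1, c1), ~~ T (r2, c2), T (r1, c2) & T (r2, c1)] ||
            [&& ~~ T (r1, c2), ~~ T (r2, c1), T (r1, c1) & T (r2, c2)])]].

Definition phiTC (T : tab n) : conf := fun v =>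
  if isR v then count (fun j => cell v j && ent T v j) (iota 0 n.+1)
  else count (fun r => cell r v && ~~ ent T r v) (iota 0 n.+1).

Definition phiCT (m : conf) : option (tab n) :=
  [pick T : tab n | EWtab T && [forall i : 'I_n, phiTC T i.+1 == m i.+1]].

Definition RecEW (T : tab n) (a : 'I_n -> int) : Prop :=
  exists x, [/\ Rec x, phiCT (minrec x) = Some T &
    forall i : 'I_n, a i = ((x i.+1)%:Z - (minrec x i.+1)%:Z)%R].

Definition Psi (T : tab n) : seq nat :=
  let c := phiTC T in
  flatten [seq (let s := [seq v <- iota 1 n | lev c v == p] in
                if odd p then s else rev s) | p <- iota 1 (2 * n + 2)].

End Ferrers.

Section Perm.
Variable n : nat.
Variable pi : seq nat.

(* the letter at position k (0-based) is an ascent top *)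
Definition asc_top (k : nat) : bool := (k == 0) || (nth 0 pi k.-1 < nth 0 pi k).

(* block level in RunDec(pi) = (D0, A1, D1, A2, ...):
   D^(0) = {0} level 0, A^(k) level 2k-1, D^(k) level 2k *)
Definition poslev (k : nat) : nat :=
  (count (fun j => asc_top j != asc_top j.-1) (iota 1 k)).+1.
Definition plev (x : nat) : nat := if x == 0 then 0 else poslev (index x pi).

Definition stable_bound (i : nat) : nat :=
  if odd (plev i) then
    count (fun j => ~~ odd (plev j) && (plev j < plev i) && (j < i)) (iota 0 n.+1)
  else
    count (fun j => odd (plev j) && (plev j < plev i) && (i < j)) (iota 0 n.+1).

Definition mu (i : nat) : nat :=
  if odd (plev i) then
    count (fun j => ~~ odd (plev j) && (plev j == (plev i).-1) && (j < i)) (iota 0 n.+1)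
  else
    count (fun j => odd (plev j) && (plev j == (plev i).-1) && (i < j)) (iota 0 n.+1).

(* a_i is stored at index i-1 of a : 'I_n -> int *)
Definition decperm (a : 'I_n -> int) : Prop :=
  perm_eq pi (iota 1 n) /\
  forall i : 'I_n, (0 <= a i)%R /\ (a i < (stable_bound i.+1)%:Z)%R.

Definition canon_decperm (a : 'I_n -> int) : Prop :=
  decperm a /\ forall i : 'I_n, (a i < (mu i.+1)%:Z)%R.

End Perm.

(* Main.v *)
Require Import Defs.
From mathcomp Require Import all_boot all_order all_algebra.
From mathcomp Require Import zify.
From Stdlib Require Import FunctionalExtensionality.
Set Implicit Arguments. Unset Strict Implicit. Unset Printing Implicit Defensive.

Section S.
Variables (n : nat) (R : {set 'I_n.+1}).
Hypothesis hF : ferrers R.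

Definition Nc (u : nat) (P : pred nat) := count (fun w => adj R u w && P w) (iota 0 n.+1).

Lemma isR_lt i : isR R i -> i < n.+1. Proof. by case/andP. Qed.
Lemma isC_lt i : isC R i -> i < n.+1. Proof. by case/andP. Qed.
Lemma isCE i : i < n.+1 -> isC R i = ~~ isR R i.
Proof. by rewrite /isC /isR => ->. Qed.
Lemma isRC i : isR R i -> isC R i = false.
Proof. by move=> h; rewrite isCE ?h ?(isR_lt h). Qed.
Lemma isCR i : isC R i -> isR R i = false.
Proof. by move=> h; move: (h); rewrite isCE ?(isC_lt h) //; case: (isR R i). Qed.
Lemma isR0 : isR R 0.
Proof.
case/andP: hF => h0 _; rewrite /isR /=.
by have -> : (inord 0 : 'I_n.+1) = ord0 by apply: val_inj; rewrite /= inordK.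
Qed.
Lemma isCn : isC R n.
Proof.
case/andP: hF => _ h; rewrite /isC ltnSn /=.
by have -> : (inord n : 'I_n.+1) = ord_max by apply: val_inj; rewrite /= inordK.
Qed.
Lemma adjC u w : adj R u w = adj R w u.
Proof. by rewrite /adj orbC. Qed.
Lemma adj_row u w : isR R u -> adj R u w = isC R w && (u < w).
Proof.
move=> h; by rewrite /adj /cell h (isRC h) /= andbF orbF.
Qed.
Lemma adj_col u w : isC R u -> adj R u w = isR R w && (w < u).
Proof.
move=> h; rewrite /adj /cell h (isCR h) /=.
by case hw: (isR R w) => //=; rewrite andbT.
Qed.

Lemma adj_lt u w : adj R u w -> (u < n.+1) && (w < n.+1).
Proof. by rewrite /adj /cell => /orP[] /and3P[/andP[h1 _] /andP[h2 _] _]; rewrite h1 h2. Qed.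
Lemma adj_neq u w : adj R u w -> u != w.
Proof.
rewrite /adj /cell => /orP[] /and3P[_ _ h]; rewrite neq_ltn h //; by rewrite orbT.
Qed.
Lemma adj_RC u w : adj R u w -> isR R u = isC R w.
Proof.
rewrite /adj /cell => /orP[] /and3P[h1 h2 _]; first by rewrite h1 h2.
by rewrite (isCR h2) (isRC h1).
Qed.
Lemma adj0 w : adj R 0 w = isC R w.
Proof.
rewrite adj_row ?isR0 //; case h: (isC R w) => //=; rewrite lt0n; apply/negP=> /eqP e.
by move: h; rewrite e (isRC isR0).
Qed.

Lemma deg_Nc v : deg R v = Nc v xpredT.
Proof. by rewrite /deg /Nc; apply: eq_count => w; rewrite andbT. Qed.
Lemma Nc_le v P : Nc v P <= deg R v.
Proof. by rewrite deg_Nc; apply: sub_count => w /andP[->]. Qed.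
Lemma Nc_mono v (P Q : pred nat) : (forall w, P w -> Q w) -> Nc v P <= Nc v Q.
Proof. by move=> h; apply: sub_count => w /andP[-> /h]. Qed.
Lemma Nc_monoA v (P Q : pred nat) : (forall w, adj R v w -> P w -> Q w) -> Nc v P <= Nc v Q.
Proof. by move=> h; apply: sub_count => w /andP[a /(h w a)]; rewrite a. Qed.
Lemma Nc_split v (P Q : pred nat) :
  Nc v P = Nc v (fun w => P w && Q w) + Nc v (fun w => P w && ~~ Q w).
Proof.
rewrite /Nc; elim: (iota 0 n.+1) => //= w s ->.
by case: (adj R v w); case: (P w); case: (Q w) => /=; lia.
Qed.

Lemma Nc_eq v (P Q : pred nat) : (forall w, w < n.+1 -> adj R v w -> P w = Q w) -> Nc v P = Nc v Q.
Proof.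
move=> h; apply: eq_in_count => w; rewrite mem_iota add0n => hw.
by case a: (adj R v w) => //=; rewrite h.
Qed.

Lemma nonsink_iota v : v \in iota 1 n -> nonsink n v.
Proof. by rewrite mem_iota /nonsink; lia. Qed.

Definition Fc (c : conf) (L : nat -> nat) p u :=
  c u + Nc u (fun w => L w <= p) - (if L u <= p then deg R u else 0).
Definition Inv (c : conf) (L : nat -> nat) p :=
  (forall u, nonsink n u -> cfg R c p u = Fc c L p u) /\
  (forall u, nonsink n u -> L u <= p -> deg R u <= c u + Nc u (fun w => L w <= p)).
Definition Lgood (L : nat -> nat) := L 0 = 0 /\ forall v, nonsink n v -> 0 < L v.

Lemma Nc_iota1 u (P : pred nat) :
  Nc u P = adj R u 0 && P 0 + count (fun w => adj R u w && P w) (iota 1 n).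
Proof. by []. Qed.

Lemma Inv0 c L : Lgood L -> Inv c L 0.
Proof.
move=> [L0 Lp]; split => u hu; last by move: (Lp u hu); lia.
rewrite /Fc /= leqn0 (negbTE (lt0n_neq0 (Lp u hu))) subn0.
congr (_ + _); rewrite Nc_iota1 L0 leqnn andbT adjC.
rewrite (@eq_in_count _ _ pred0) ?count_pred0 ?addn0 //.
move=> w /nonsink_iota hw /=; by rewrite leqn0 (negbTE (lt0n_neq0 (Lp w hw))) andbF.
Qed.

Lemma Inv_step c L p : Lgood L -> Inv c L p ->
  (forall v, nonsink n v -> inS R (cfg R c p) p.+1 v = (L v == p.+1)) ->
  Inv c L p.+1.
Proof.
move=> [L0 Lp] [I1 I2] hS.
have hcnt u : count (fun v => inS R (cfg R c p) p.+1 v && adj R v u) (iota 1 n)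
      = Nc u (fun w => L w == p.+1).
  rewrite Nc_iota1 L0 andbF add0n; apply: eq_in_count => w /nonsink_iota hw.
  by rewrite hS // andbC adjC.
have hsplit u : Nc u (fun w => L w <= p.+1) = Nc u (fun w => L w <= p) + Nc u (fun w => L w == p.+1).
  rewrite (Nc_split u _ (fun w => L w <= p)); congr (_ + _); apply: Nc_eq => w _ _.
    by rewrite andb_idl // => h; exact: leqW.
  by rewrite -ltnNge eqn_leq andbC.
have hdegS u : nonsink n u -> L u = p.+1 -> deg R u <= c u + Nc u (fun w => L w <= p).
  move=> hu e; move: (hS u hu); rewrite e eqxx /inS => /and3P[_ _].
  by rewrite I1 // /Fc e ltnn subn0.
split => u hu.
  rewrite /= hcnt hS // I1 // /Fc hsplit.
  have A : p < L u \/ deg R u <= c u + Nc u (fun w => L w <= p).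
    by case: (leqP (L u) p) => h; [right; exact: I2 u hu h | left].
  have B : L u <> p.+1 \/ deg R u <= c u + Nc u (fun w => L w <= p).
    by case: (L u =P p.+1) => h; [right; exact: hdegS u hu h | left].
  move: A B; case: (L u =P p.+1) => e1; case: (leqP (L u) p) => e2; case: (leqP (L u) p.+1) => e3; lia.
have A : p < L u \/ deg R u <= c u + Nc u (fun w => L w <= p).
  by case: (leqP (L u) p) => h; [right; exact: I2 u hu h | left].
have B : L u <> p.+1 \/ deg R u <= c u + Nc u (fun w => L w <= p).
  by case: (L u =P p.+1) => h; [right; exact: hdegS u hu h | left].
rewrite hsplit; move: A B; lia.
Qed.

Notation K := (2 * n + 2).
Lemma lev0 c : lev R c 0 = 0. Proof. by []. Qed.
Lemma levE c v : nonsink n v ->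
  lev R c v = (find (fun p => inS R (cfg R c p) p.+1 v) (iota 0 K)).+1.
Proof. by rewrite /nonsink /lev; case: v. Qed.
Lemma lev_le c v : lev R c v <= K.+1.
Proof.
rewrite /lev; case: (v == 0) => //; rewrite ltnS.
by rewrite -[X in _ <= X](size_iota 0 K) find_size.
Qed.
Lemma Lgood_lev c : Lgood (lev R c).
Proof. by split => // v hv; rewrite levE. Qed.
Lemma levE1 c v q : nonsink n v -> lev R c v = q.+1 -> q < K -> inS R (cfg R c q) q.+1 v.
Proof.
move=> hv; rewrite levE // => -[e] hq.
have := @nth_find _ 0 (fun p => inS R (cfg R c p) p.+1 v) (iota 0 K).
rewrite has_find size_iota e => h; have := h hq; by rewrite nth_iota // add0n.
Qed.
Lemma levE2 c v p : nonsink n v -> p < K -> inS R (cfg R c p) p.+1 v -> lev R c v <= p.+1.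
Proof.
move=> hv hp hin; rewrite levE // ltnS leqNgt; apply/negP => hlt.
have := @before_find _ 0 (fun p => inS R (cfg R c p) p.+1 v) (iota 0 K) p hlt.
by rewrite nth_iota // hin.
Qed.
Lemma levE3 c v p : nonsink n v -> p.+1 < lev R c v -> ~~ inS R (cfg R c p) p.+1 v.
Proof.
move=> hv; rewrite levE // ltnS => hlt.
have := @before_find _ 0 (fun p => inS R (cfg R c p) p.+1 v) (iota 0 K) p hlt.
have hp : p < K by apply: leq_trans hlt _; rewrite -[X in _ <= X](size_iota 0 K) find_size.
by rewrite nth_iota // => ->.
Qed.

Lemma fwd c : stable R c -> forall p, p <= K -> Inv c (lev R c) p.
Proof.
move=> st; elim=> [|p IH] hp; first exact: Inv0 (Lgood_lev c).
have hp' : p < K by [].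
have HI := IH (ltnW hp'); apply: (Inv_step (Lgood_lev c) HI) => v hv.
case: (lev R c v =P p.+1) => e; first exact: levE1 hv e hp'.
apply/negP => hin; have hl := levE2 hv hp' hin.
have hl' : lev R c v <= p by move: hl e; lia.
move: hin; rewrite /inS => /and3P[_ _]; rewrite HI.1 // /Fc hl'.
move: (st v hv) (Nc_le v (fun w => lev R c w <= p)); lia.
Qed.

Lemma find_iota_eq (P : pred nat) m k : m < k -> (forall p, p < k -> P p = (p == m)) ->
  find P (iota 0 k) = m.
Proof.
move=> hm hP.
have hh : has P (iota 0 k) by apply/hasP; exists m; rewrite ?mem_iota ?hP //.
have := nth_find 0 hh; move: hh; rewrite has_find size_iota => hf.
by rewrite nth_iota // add0n hP // => /eqP.
Qed.

Definition Lok (L : nat -> nat) := L 0 = 0 /\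
  forall v, nonsink n v -> [/\ 0 < L v, L v <= K & odd (L v) = isC R v].
Definition Lbnd (c : conf) (L : nat -> nat) := forall v, nonsink n v ->
  Nc v (fun w => L v < L w) <= c v /\ c v < Nc v (fun w => (L v).-1 <= L w).

Lemma Lok_good L : Lok L -> Lgood L.
Proof. by case=> h0 h; split => // v /h []. Qed.

Lemma Lok_odd L : Lok L -> forall w, w < n.+1 -> odd (L w) = isC R w.
Proof.
case=> h0 h w hw; case: (posnP w) => [->|wp]; first by rewrite h0 (isRC isR0).
by case: (h w) => //; rewrite /nonsink wp -ltnS.
Qed.

Lemma Lok_adj L : Lok L -> forall u w, adj R u w -> odd (L u) = ~~ odd (L w).
Proof.
move=> hL u w a; case/andP: (adj_lt a) => hu hw.
by rewrite !(Lok_odd hL) // (isCE hu) (adj_RC a) (isCE hw) negbK.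
Qed.

Lemma Lok_adj_neq L : Lok L -> forall u w, adj R u w -> L u != L w.
Proof.
move=> hL u w a; apply/negP => /eqP e; have := Lok_adj hL a; rewrite e.
by case: (odd _).
Qed.

Lemma deg_split v (P : pred nat) : deg R v = Nc v P + Nc v (predC P).
Proof.
rewrite deg_Nc (Nc_split v xpredT P); congr (_ + _); by apply: Nc_eq.
Qed.

Lemma char_inS c L p : Lok L -> Lbnd c L -> Inv c L p ->
  forall v, nonsink n v -> inS R (cfg R c p) p.+1 v = (L v == p.+1).
Proof.
move=> hL hB [I1 _] v hv; rewrite /inS hv /= I1 // /Fc.
case: (hL.2 v hv) => Lp LK Lodd.
have hcl : (if odd p.+1 then isC R v else isR R v) = (odd p.+1 == odd (L v)).
  rewrite Lodd; have hv1 : v < n.+1 by move: hv; rewrite /nonsink; lia.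
  by rewrite (isCE hv1); case: (odd _); case: (isR R v).
rewrite hcl; case: (hB v hv) => lo up.
have hd := deg_split v (fun w => L w <= p).
case: (L v =P p.+1) => e.
  rewrite e eqxx ltnn subn0 /=.
  suff: Nc v (predC (fun w => L w <= p)) <= Nc v (fun w => L v < L w) by lia.
  apply: Nc_monoA => w a /=; rewrite -ltnNge => h.
  have := Lok_adj_neq hL a; rewrite e; move: h; lia.
case: (leqP (L v) p) => h1.
  apply/negP => /andP[_ hh]; move: (Nc_le v (fun w => (L v).-1 <= L w)).
  move: hh up; lia.
case: (odd p.+1 =P odd (L v)) => //= hpar.
have h3 : p.+2 < L v.
  move: h1 e hpar; case: (ltngtP (L v) p.+2) => //; last first.
    by move=> ->; rewrite /= negbK => _ _ /eqP; case: (odd p).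
  lia.
apply/negP => hh.
suff: Nc v (fun w => (L v).-1 <= L w) <= Nc v (predC (fun w => L w <= p)) by lia.
apply: Nc_monoA => w _ /=; lia.
Qed.

Lemma char_Inv c L : Lok L -> Lbnd c L -> forall p, Inv c L p.
Proof.
move=> hL hB; elim=> [|p IH]; first exact: Inv0 (Lok_good hL).
exact: (Inv_step (Lok_good hL) IH (char_inS hL hB IH)).
Qed.

Lemma char_lev c L : Lok L -> Lbnd c L -> forall v, nonsink n v -> lev R c v = L v.
Proof.
move=> hL hB v hv; rewrite levE //; case: (hL.2 v hv) => Lp LK _.
rewrite (@find_iota_eq _ (L v).-1); first by rewrite prednK.
  by move: Lp LK; lia.
move=> p _; rewrite (char_inS hL hB (char_Inv hL hB p)) //.
by apply/eqP/eqP; move: Lp; lia.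
Qed.

Section Fwd.
Variable c : conf.
Hypothesis st : stable R c.
Local Notation L := (lev R c).

Lemma nonsink_lt v : nonsink n v -> v < n.+1.
Proof. by rewrite /nonsink; lia. Qed.

Lemma F1 v : nonsink n v -> L v <= K -> odd (L v) = isC R v.
Proof.
move=> hv hK; have Lp := (Lgood_lev c).2 v hv.
have := @levE1 c v (L v).-1 hv (esym (prednK Lp)) ltac:(move: Lp hK; lia).
rewrite prednK // /inS => /and3P[_ h _]; move: h.
rewrite (isCE (nonsink_lt hv)); by case: (odd _); case: (isR R v).
Qed.

Lemma F1all w : w < n.+1 -> L w <= K -> odd (L w) = isC R w.
Proof.
case: (posnP w) => [->|wp] hw hK; first by rewrite lev0 (isRC isR0).
apply: F1 => //; rewrite /nonsink wp; lia.
Qed.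

Lemma F2 v : nonsink n v -> L v <= K -> deg R v <= c v + Nc v (fun w => L w <= (L v).-1).
Proof.
move=> hv hK; have Lp := (Lgood_lev c).2 v hv.
have := @levE1 c v (L v).-1 hv (esym (prednK Lp)) ltac:(move: Lp hK; lia).
rewrite prednK // /inS => /and3P[_ _]; rewrite (fwd st (_ : (L v).-1 <= K)).1 //; last by lia.
rewrite /Fc; move: Lp; case: leqP; lia.
Qed.

Lemma F3 v : nonsink n v -> L v <= K -> 2 <= L v ->
  c v + Nc v (fun w => L w <= L v - 3) < deg R v.
Proof.
move=> hv hK h2; have hpar := F1 hv hK.
case: (leqP 3 (L v)) => h3.
  have := @levE3 c v (L v - 3) hv ltac:(lia).
  rewrite /inS hv /= (fwd st (_ : L v - 3 <= K)).1 //; last by lia.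
  have hodd : ~~ odd (L v - 3) = odd (L v) by rewrite -{2}(subnK h3) addn3 /= !negbK.
  have hcl : (if isC R v then isC R v else isR R v) = true.
    by case h: (isC R v) => //; move: (isCE (nonsink_lt hv)); rewrite h; case: (isR R v).
  rewrite hodd hpar hcl /= /Fc; have -> : (L v <= L v - 3) = false by apply/negbTE; rewrite -ltnNge; lia.
  by rewrite subn0 -ltnNge.
have e2 : L v = 2 by lia.
have hrow : isC R v = false by rewrite -F1 // e2.
have hR : isR R v by move: (isCE (nonsink_lt hv)); rewrite hrow; case: (isR R v).
rewrite e2 /= (@Nc_eq v _ xpred0).
  rewrite (_ : Nc v xpred0 = 0) ?addn0; first exact: st hv.
  by rewrite /Nc (@eq_count _ _ pred0) ?count_pred0 // => w; rewrite andbF.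
move=> w hw; rewrite adj_row // => /andP[hC _] /=.
have wp : 0 < w by case: (posnP w) hC => // ->; rewrite (isRC isR0).
by rewrite leqn0 (negbTE (lt0n_neq0 ((Lgood_lev c).2 w _))) // /nonsink wp; lia.
Qed.

Lemma Nc_lt_ex v (P Q : pred nat) : Nc v P < Nc v Q ->
  exists w, [/\ w < n.+1, adj R v w, Q w & ~~ P w].
Proof.
move=> h.
have : 0 < Nc v (fun w => Q w && ~~ P w).
  move: h; rewrite (Nc_split v Q P).
  have : Nc v (fun w => Q w && P w) <= Nc v P by apply: Nc_mono => w /andP[].
  lia.
rewrite /Nc -has_count => /hasP[w]; rewrite mem_iota add0n => hw /and3P[a q p].
by exists w.
Qed.

Lemma odd_sub2 m : 2 <= m -> odd (m - 2) = odd m.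
Proof. by move=> h; rewrite -{2}(subnK h) oddD addbF. Qed.

Lemma prev v : nonsink n v -> L v <= K ->
  exists w, [/\ w < n.+1, adj R v w & L w = (L v).-1].
Proof.
move=> hv hK; have Lp := (Lgood_lev c).2 v hv; have hpar := F1 hv hK.
case: (leqP 2 (L v)) => h2; last first.
  have e1 : L v = 1 by lia.
  exists 0; split => //; rewrite ?e1 // adjC adj0 -hpar e1 //.
have := F2 hv hK; have := F3 hv hK h2 => A B.
have : Nc v (fun w => L w <= L v - 3) < Nc v (fun w => L w <= (L v).-1) by lia.
case/Nc_lt_ex => w [hw a q p]; exists w; split => //.
have hwK : L w <= K by move: q; lia.
have pw := F1all hw hwK.
have hneq : L w != L v - 2.
  apply/negP => /eqP e; move: pw; rewrite e odd_sub2 // hpar -(adj_RC a).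
  rewrite (isCE (nonsink_lt hv)); by case: (isR R v).
move: q p hneq; rewrite -ltnNge; lia.
Qed.

Lemma chain d : forall v, nonsink n v -> L v <= K -> d < L v ->
  exists w, nonsink n w /\ L w = L v - d.
Proof.
elim: d => [|d IH] v hv hK hd; first by exists v; rewrite subn0.
have [w [hw e]] := IH v hv hK (ltnW hd).
have hwK : L w <= K by lia.
have [w' [hw' a e']] := prev hw hwK.
exists w'; split; last by lia.
have : 0 < L w' by lia.
case: (posnP w') => [->|wp]; first by rewrite lev0.
by rewrite /nonsink wp; lia.
Qed.

Lemma lev_le_n v : nonsink n v -> L v <= K -> L v <= n.
Proof.
move=> hv hK.
have sub : {subset iota 1 (L v) <= [seq L w | w <- iota 1 n]}.
  move=> k; rewrite mem_iota => /andP[k1 k2].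
  have [w [hw e]] := @chain (L v - k) v hv hK ltac:(lia).
  apply/mapP; exists w; first by rewrite mem_iota; move: hw; rewrite /nonsink; lia.
  lia.
have := uniq_leq_size (iota_uniq 1 (L v)) sub.
by rewrite size_iota size_map size_iota.
Qed.

End Fwd.

Lemma n_pos : 0 < n.
Proof. rewrite lt0n; apply/negP => /eqP e; have := f_equal (isC R) e; by rewrite isCn (isRC isR0). Qed.

Definition NoFSC (c : conf) := forall S : pred nat, (forall v, S v -> nonsink n v) ->
  (exists v, S v) -> exists v, S v /\ Nc v S <= c v.

Lemma alltop c : stable R c -> NoFSC c -> forall v, nonsink n v -> lev R c v <= K.
Proof.
move=> st hN v0 hv0; case: (leqP (lev R c v0) K) => // hv0K.
pose S := fun v => nonsink n v && (K < lev R c v).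
have [v [/andP[hv hvK] hle]] : exists v, S v /\ Nc v S <= c v.
  apply: hN; first by move=> v /andP[].
  by exists v0; rewrite /S hv0.
pose p := if odd n.+1 == isC R v then n else n.+1.
have hp : p.+1 < lev R c v by move: (lev_le c v) hvK; rewrite /p; case: (_ == _); lia.
have hpK : p <= K by rewrite /p; case: (_ == _); lia.
have := levE3 hv hp; rewrite /inS hv (fwd st hpK).1 // /Fc.
have -> : (lev R c v <= p) = false by apply/negbTE; rewrite -ltnNge; lia.
have -> : (if odd p.+1 then isC R v else isR R v) = true.
  have hodd : odd p.+1 = isC R v.
    rewrite /p; case: eqP => e //=; move: e => /=; by case: (odd n); case: (isC R v).
  rewrite hodd; case h: (isC R v) => //; move: (isCE (nonsink_lt hv)); rewrite h.
  by case: (isR R v).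
rewrite subn0 /= -ltnNge => hlt.
have hd := deg_split v (fun w => lev R c w <= p).
have : Nc v (predC (fun w => lev R c w <= p)) <= Nc v S.
  apply: Nc_monoA => w a /=; rewrite -ltnNge => hw.
  have hwn : w < n.+1 by case/andP: (adj_lt a).
  have hws : nonsink n w.
    case: (posnP w) hw => [->|wp] hw; first by rewrite lev0 in hw.
    by rewrite /nonsink wp; lia.
  rewrite /S hws /=; case: (leqP (lev R c w) K) => // hwK.
  have := lev_le_n st hws hwK; rewrite /p in hw; move: hw; case: (_ == _); lia.
lia.
Qed.

Lemma fwd_Lok c : stable R c -> (forall v, nonsink n v -> lev R c v <= K) -> Lok (lev R c).
Proof.
move=> st hK; split => // v hv; split; [exact: (Lgood_lev c).2 v hv | exact: hK | ]. exact: (F1 hv (hK v hv)).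
Qed.

Lemma Nc_pos v w (P : pred nat) : w < n.+1 -> adj R v w -> P w -> 0 < Nc v P.
Proof.
move=> hw a p; rewrite /Nc -has_count; apply/hasP; exists w; last by rewrite a.
by rewrite mem_iota.
Qed.

Lemma fwd_Lbnd c : stable R c -> (forall v, nonsink n v -> lev R c v <= K) -> Lbnd c (lev R c).
Proof.
move=> st hK; have hL := fwd_Lok st hK; move=> v hv; split.
  have := F2 st hv (hK v hv); have := deg_split v (fun w => lev R c w <= (lev R c v).-1).
  suff: Nc v (fun w => lev R c v < lev R c w) <= Nc v (predC (fun w => lev R c w <= (lev R c v).-1)) by lia.
  apply: Nc_monoA => w a /=; rewrite -ltnNge; lia.
case: (leqP 2 (lev R c v)) => h2.
  have := F3 st hv (hK v hv) h2; have := deg_split v (fun w => lev R c w <= lev R c v - 3).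
  suff: Nc v (predC (fun w => lev R c w <= lev R c v - 3)) <= Nc v (fun w => (lev R c v).-1 <= lev R c w) by lia.
  apply: Nc_monoA => w a /=; rewrite -ltnNge => h.
  have := Lok_adj hL a; case: (lev R c w =P lev R c v - 2) => e.
    by rewrite e odd_sub2 //; case: (odd _).
  move=> _; move: h e; lia.
have e1 : lev R c v = 1 by have := (Lgood_lev c).2 v hv; lia.
rewrite e1 /= (@Nc_eq v _ xpredT) -?deg_Nc; [exact: st hv | by []].
Qed.

Lemma Lbnd_prev c L : Lok L -> Lbnd c L -> forall v, nonsink n v ->
  exists w, [/\ w < n.+1, adj R v w & L w = (L v).-1].
Proof.
move=> hL hB v hv; case: (hB v hv) => lo up.
have : Nc v (fun w => L v < L w) < Nc v (fun w => (L v).-1 <= L w) by lia.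
case/Nc_lt_ex => w [hw a q p]; exists w; split => //.
have := Lok_adj_neq hL a; move: q p; rewrite -leqNgt; lia.
Qed.

Lemma Nc_lt_deg v w (S : pred nat) : w < n.+1 -> adj R v w -> ~~ S w -> Nc v S < deg R v.
Proof.
move=> hw a s; rewrite (deg_split v S); have := @Nc_pos v w (predC S) hw a s; lia.
Qed.

Lemma noFSC_cmax : NoFSC (cmax R).
Proof.
move=> S hS [v0 sv0].
case hc: (has (fun w => S w && isC R w) (iota 1 n)).
  case/hasP: hc => w _ /andP[sw cw]; exists w; split => //.
  have a0 : adj R w 0 by rewrite adjC adj0.
  have s0 : ~~ S 0 by apply/negP => /hS.
  have := Nc_lt_deg (ltn0Sn n) a0 s0; rewrite /cmax; lia.
exists v0; split => //; have hv0 := hS v0 sv0.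
have hv0r : isC R v0 = false.
  apply/negP => h; move/negP: hc; apply; apply/hasP; exists v0; rewrite ?sv0 ?h //.
  by rewrite mem_iota; move: hv0; rewrite /nonsink; lia.
have hSn : ~~ S n.
  apply/negP => h; move/negP: hc; apply; apply/hasP; exists n; rewrite ?h ?isCn //.
  by rewrite mem_iota; have := n_pos; lia.
have hR : isR R v0 by move: (isCE (nonsink_lt hv0)); rewrite hv0r; case: (isR R v0).
have a : adj R v0 n.
  rewrite adj_row // isCn /=; rewrite ltn_neqAle; move: hv0; rewrite /nonsink => /andP[_ ->].
  rewrite andbT; apply/negP => /eqP e; move: hv0r; rewrite e isCn.
  done.
have := Nc_lt_deg (ltnSn n) a hSn; rewrite /cmax; lia.
Qed.

Lemma Nc_pred1 u v : Nc u (fun w => w == v) <= adj R u v.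
Proof.
case a: (adj R u v).
  apply: leq_trans (_ : count (pred1 v) (iota 0 n.+1) <= 1).
    by apply: sub_count => w /andP[_].
  by rewrite count_uniq_mem ?iota_uniq //; case: (_ \in _).
suff -> : Nc u (fun w => w == v) = 0 by [].
rewrite /Nc (@eq_count _ _ pred0) ?count_pred0 // => w /=.
by case: eqP => [->|]; rewrite ?a ?andbF.
Qed.

Lemma noFSC_step c d : NoFSC c -> sp_step R c d -> NoFSC d.
Proof.
move=> hN [[v hv ->]|[v [hv hdeg ->]]] S hS hne.
  have [u [su hu]] := hN S hS hne; exists u; split => //.
  rewrite /add_grain; case: (_ == _); lia.
case sv: (S v); last first.
  have [u [su hu]] := hN S hS hne; exists u; split => //.
  rewrite /topple; have -> : (u == v) = false by apply/negbTE; apply/eqP => e; move: su; rewrite e sv.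
  case: (_ && _); lia.
pose S' := fun w => S w && (w != v).
case: (boolP (has S' (iota 1 n))) => hs.
  have [u [/andP[su uv] hu]] : exists u, S' u /\ Nc u S' <= c u.
    apply: hN; first by move=> w /andP[/hS].
    by case/hasP: hs => u _ h; exists u.
  exists u; split => //; rewrite /topple (negbTE uv) (hS u su) /=.
  have := Nc_split u S (fun w => w != v).
  have : Nc u (fun w => S w && ~~ (w != v)) <= Nc u (fun w => w == v).
    by apply: Nc_mono => w; rewrite negbK => /andP[].
  have := Nc_pred1 u v; rewrite adjC /S' in hu *; case: (adj R v u) => /=; lia.
exists v; split => //.
suff -> : Nc v S = 0 by [].
rewrite /Nc (@eq_count _ _ pred0) ?count_pred0 // => w /=.
case a: (adj R v w) => //=; apply/negP => sw.
move/negP: hs; apply; apply/hasP; exists w.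
  rewrite mem_iota; have := hS w sw; rewrite /nonsink; lia.
by rewrite /S' sw /= eq_sym adj_neq.
Qed.

Lemma noFSC_reach c d : NoFSC c -> reach (sp_step R) c d -> NoFSC d.
Proof. by move=> h r; elim: r h => // x y z st _ IH h; apply: IH; apply: noFSC_step st. Qed.

Lemma noFSC_eq c d : conf_eq n c d -> NoFSC c -> NoFSC d.
Proof.
move=> e h S hS hne; have [v [sv hv]] := h S hS hne; exists v; split => //.
by rewrite -e // hS.
Qed.

Lemma Rec_noFSC x : Rec R x -> stable R x /\ NoFSC x.
Proof.
case=> st [d r e]; split => //; apply: noFSC_eq e _; exact: noFSC_reach noFSC_cmax r.
Qed.

Definition reachE (c d : conf) := exists2 d', reach (sp_step R) c d' & conf_eq n d' d.

Lemma conf_eq_sym c d : conf_eq n c d -> conf_eq n d c.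
Proof. by move=> h v hv; rewrite h. Qed.
Lemma conf_eq_trans c d e : conf_eq n c d -> conf_eq n d e -> conf_eq n c e.
Proof. by move=> h1 h2 v hv; rewrite h1 ?h2. Qed.

Lemma step_eq c c' d : conf_eq n c c' -> sp_step R c d ->
  exists2 d', sp_step R c' d' & conf_eq n d d'.
Proof.
move=> e [[v hv ->]|[v [hv hd ->]]].
  exists (add_grain v c'); first by left; exists v.
  by move=> u hu; rewrite /add_grain e.
exists (topple R v c'); first by right; exists v; split => //; rewrite -e.
by move=> u hu; rewrite /topple e.
Qed.

Lemma reach_eq c c' d : conf_eq n c c' -> reach (sp_step R) c d ->
  exists2 d', reach (sp_step R) c' d' & conf_eq n d d'.
Proof.
move=> e r; move: c' e; elim: r => [x|x y z s _ IH] c' e; first by exists c'; [constructor|].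
have [y' s' e'] := step_eq e s; have [z' r' e''] := IH y' e'.
by exists z' => //; apply: reach_step s' r'.
Qed.

Lemma reach_trans c d e : reach (sp_step R) c d -> reach (sp_step R) d e -> reach (sp_step R) c e.
Proof. by elim=> // x y z s _ IH r; apply: reach_step s (IH r). Qed.

Lemma reachE_trans c d e : reachE c d -> reachE d e -> reachE c e.
Proof.
move=> [d' r1 e1] [e' r2 e2].
have [e'' r3 e3] := reach_eq (conf_eq_sym e1) r2.
exists e''; first exact: reach_trans r1 r3.
exact: conf_eq_trans (conf_eq_sym e3) e2.
Qed.

Lemma reachE_eq c d : conf_eq n c d -> reachE c d.
Proof. by move=> e; exists c => //; constructor. Qed.

Lemma reach_add1 v k c : nonsink n v ->
  reach (sp_step R) c (fun u => if u == v then c u + k else c u).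
Proof.
move=> hv; elim: k => [|k IH].
  rewrite (_ : (fun u => _) = c); first by constructor.
  by apply: functional_extensionality => u; case: eqP => // ->; rewrite addn0.
apply: reach_trans IH _; apply: (@reach_step _ _ (fun u => if u == v then c u + k.+1 else c u)); last by constructor.
left; exists v => //; apply: functional_extensionality => u; rewrite /add_grain.
by case: (u == v); rewrite ?addnS.
Qed.

Lemma reach_addl (s : seq nat) c d : all (nonsink n) s -> (forall v, nonsink n v -> c v <= d v) ->
  reach (sp_step R) c (fun u => if u \in s then d u else c u).
Proof.
elim: s => [|v s IH] /=.
  move=> _ _; rewrite (_ : (fun u => _) = c); first by constructor.
  by apply: functional_extensionality.
case/andP=> hv hs hle; apply: reach_trans (IH hs hle) _.
set c1 := (fun u => if u \in s then d u else c u).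
have := reach_add1 (d v - c1 v) c1 hv.
rewrite (_ : (fun u => _) = (fun u => if u \in v :: s then d u else c u)) //.
apply: functional_extensionality => u; rewrite in_cons /c1.
case: eqP => [->|]; last by [].
by case: (v \in s) => /=; [lia | move: (hle v hv); lia].
Qed.

Lemma reachE_add c d : (forall v, nonsink n v -> c v <= d v) -> reachE c d.
Proof.
move=> hle; exists (fun u => if u \in iota 1 n then d u else c u).
  by apply: reach_addl => //; apply/allP => v /nonsink_iota.
move=> u hu; rewrite mem_iota; move: hu; rewrite /nonsink => hu.
by have -> : (1 <= u < 1 + n) = true by lia.
Qed.

Definition Ts (s : seq nat) (d : conf) : conf := fun u =>
  (if u \in s then d u - deg R u else d u) +
  (if nonsink n u then count (fun v => adj R v u) s else 0).

Lemma reach_topl s d : uniq s -> all (nonsink n) s ->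
  (forall v w, v \in s -> w \in s -> ~~ adj R v w) ->
  (forall v, v \in s -> deg R v <= d v) -> reach (sp_step R) d (Ts s d).
Proof.
elim: s d => [|v s IH] d.
  move=> *; rewrite (_ : Ts [::] d = d); first by constructor.
  by apply: functional_extensionality => u; rewrite /Ts /=; case: (nonsink n u); rewrite addn0.
rewrite cons_uniq => /andP[vs us] /= /andP[hv hs] hna hdeg.
apply: (@reach_step _ _ (topple R v d)).
  by right; exists v; split => //; apply: hdeg; rewrite mem_head.
have hna' : forall v w, v \in s -> w \in s -> ~~ adj R v w.
  by move=> x y hx hy; apply: hna; rewrite in_cons ?hx ?hy orbT.
have hvs : forall w, w \in s -> adj R v w = false.
  by move=> w hw; apply/negbTE; apply: hna; rewrite in_cons ?eqxx ?hw ?orbT.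
have H1 : forall w, w \in s -> deg R w <= topple R v d w.
  move=> w hw; rewrite /topple.
  have -> : (w == v) = false by apply/negbTE; apply/negP => /eqP e; move: vs; rewrite -e hw.
  have := hdeg w; rewrite in_cons hw orbT => /(_ isT).
  case: (_ && _) => //; lia.
have := IH (topple R v d) us hs hna' H1.
rewrite (_ : Ts s (topple R v d) = Ts (v :: s) d) //.
apply: functional_extensionality => u; rewrite /Ts /topple in_cons /=.
case: (u =P v) => [->|uv].
  rewrite (negbTE vs) hv /=.
  have -> : adj R v v = false by apply/negbTE; apply/negP => /adj_neq; rewrite eqxx.
  by [].
case us': (u \in s) => /=.
  by rewrite (hvs u us') andbF.
by case: (nonsink n u); case: (adj R v u) => /=; lia.
Qed.

Lemma Nc_le0 u L : Lgood L -> Nc u (fun w => L w <= 0) = adj R u 0.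
Proof.
move=> [L0 Lp]; rewrite Nc_iota1 L0 leqnn andbT.
rewrite (@eq_in_count _ _ pred0) ?count_pred0 ?addn0 //.
move=> w /nonsink_iota hw /=; by rewrite leqn0 (negbTE (lt0n_neq0 (Lp w hw))) andbF.
Qed.

Lemma count_adj_filter u (P : pred nat) : P 0 = false ->
  count (fun v => adj R v u) [seq v <- iota 1 n | P v] = Nc u P.
Proof.
move=> P0; rewrite count_filter Nc_iota1 P0 andbF add0n.
by apply: eq_count => v /=; rewrite adjC andbC.
Qed.

Section Burn.
Variables (x : conf) (L : nat -> nat).
Hypothesis hL : Lok L.
Hypothesis hlo : forall v, nonsink n v -> Nc v (fun w => L v < L w) <= x v.

Definition ck k : conf := fun u => x u + k * adj R 0 u.

Lemma burn_phase k p : reachE (Fc (ck k) L p) (Fc (ck k) L p.+1).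
Proof.
have Hk : forall u, nonsink n u -> L u <= p.+1 -> deg R u <= ck k u + Nc u (fun w => L w <= p).
  move=> u hu hup; rewrite (deg_split u (fun w => L u < L w)).
  have := hlo hu; rewrite /ck.
  have : Nc u (predC (fun w => L u < L w)) <= Nc u (fun w => L w <= p).
    apply: Nc_monoA => w a /=; have := Lok_adj_neq hL a; move: hup; lia.
  lia.
pose s := [seq v <- iota 1 n | L v == p.+1].
have mems u : nonsink n u -> (u \in s) = (L u == p.+1).
  move=> hu; rewrite mem_filter mem_iota.
  have -> : (1 <= u < 1 + n) = true by move: hu; rewrite /nonsink; lia.
  by rewrite andbT.
exists (Ts s (Fc (ck k) L p)).
  apply: reach_topl.
  - by apply: filter_uniq; apply: iota_uniq.
  - by apply/allP => v; rewrite mem_filter => /andP[_ /nonsink_iota].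
  - move=> v w; rewrite !mem_filter => /andP[/eqP e1 _] /andP[/eqP e2 _].
    by apply/negP => /(Lok_adj_neq hL); rewrite e1 e2 eqxx.
  - move=> v; rewrite mem_filter => /andP[/eqP e hv]; have hv' := nonsink_iota hv.
    by rewrite /Fc e ltnn subn0; apply: Hk; rewrite ?e.
move=> u hu; rewrite /Ts mems // hu count_adj_filter; last by rewrite hL.1.
have hsplit : Nc u (fun w => L w <= p.+1) = Nc u (fun w => L w <= p) + Nc u (fun w => L w == p.+1).
  rewrite (Nc_split u _ (fun w => L w <= p)); congr (_ + _); apply: Nc_eq => w _ _.
    by rewrite andb_idl // => h; exact: leqW.
  by rewrite -ltnNge eqn_leq andbC.
have := Hk u hu; rewrite /Fc hsplit.
case: (L u =P p.+1) => e1; case: (leqP (L u) p) => e2; case: (leqP (L u) p.+1) => e3; lia.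
Qed.

Lemma burn_all k p : reachE (Fc (ck k) L 0) (Fc (ck k) L p).
Proof.
elim: p => [|p IH]; first exact: reachE_eq.
exact: reachE_trans IH (burn_phase k p).
Qed.

Lemma burn k : reachE (ck k) x.
Proof.
elim: k => [|k IH]; first by apply: reachE_eq => u hu; rewrite /ck mul0n addn0.
apply: (reachE_trans _ IH); apply: (reachE_trans _ (reachE_trans (burn_all k K) _)).
  apply: reachE_eq => u hu; rewrite /Fc (Nc_le0 _ (Lok_good hL)).
  have := (hL.2 u hu); case=> up _ _; rewrite leqn0 (negbTE (lt0n_neq0 up)) subn0 /ck adjC.
  by rewrite mulSn; lia.
apply: reachE_eq => u hu; rewrite /Fc.
have := (hL.2 u hu); case=> _ uK _; rewrite uK.
rewrite (@Nc_eq u _ xpredT) -?deg_Nc; first by rewrite addnK.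
move=> w hw _; case: (posnP w) => [->|wp]; first by rewrite hL.1.
by case: (hL.2 w) => //; rewrite /nonsink wp; lia.
Qed.

Lemma deg_le u : deg R u <= n.+1.
Proof. by rewrite /deg; apply: leq_trans (count_size _ _) _; rewrite size_iota. Qed.

Lemma reach_x : reachE (cmax R) x.
Proof.
pose sR := [seq v <- iota 1 n | isR R v].
pose E : conf := fun u => (x u + K * adj R 0 u + (if isR R u then deg R u else 0)) -
   (if isC R u then count (fun v => adj R v u) sR else 0).
have csR u : count (fun v => adj R v u) sR <= n.
  apply: leq_trans (count_size _ _) _; rewrite /sR size_filter.
  by apply: leq_trans (count_size _ _) _; rewrite size_iota.
have memsR u : nonsink n u -> (u \in sR) = isR R u.
  move=> hu; rewrite mem_filter mem_iota.
  have -> : (1 <= u < 1 + n) = true by move: hu; rewrite /nonsink; lia.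
  by rewrite andbT.
apply: (@reachE_trans _ E).
  apply: reachE_add => u hu; rewrite /cmax /E adj0; move: (deg_le u) (csR u).
  have := isCE (nonsink_lt hu); case: (isR R u) => /= -> /=; lia.
apply: reachE_trans (burn K).
exists (Ts sR E).
  apply: reach_topl.
  - by apply: filter_uniq; apply: iota_uniq.
  - by apply/allP => v; rewrite mem_filter => /andP[_ /nonsink_iota].
  - move=> v w; rewrite !mem_filter => /andP[r1 _] /andP[r2 _].
    by apply/negP => /adj_RC; rewrite r1 (isRC r2).
  - move=> v; rewrite mem_filter => /andP[r hv]; rewrite /E r (isRC r) adj0 (isRC r).
    by lia.
move=> u hu; rewrite /Ts memsR // hu /E /ck adj0.
have := isCE (nonsink_lt hu); case hr: (isR R u) => /= ->.
  rewrite (@eq_in_count _ _ pred0) ?count_pred0.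
    by rewrite muln0 addn0 subn0 addnK addn0.
  move=> v; rewrite mem_filter => /andP[r _] /=; apply/negP => /adj_RC.
  by rewrite r (isRC hr).
have := csR u; lia.
Qed.
End Burn.

Lemma inord0 : (inord 0 : 'I_n.+1) = ord0.
Proof. by apply: val_inj; rewrite /= inordK. Qed.

Lemma cell_adj i j : cell R i j -> adj R i j.
Proof. by rewrite /adj => ->. Qed.

Section EW.
Variable T : tab n.
Hypothesis hT : EWtab R T.

Definition out v w := if isR R v then ent T v w else ~~ ent T w v.

Lemma phiTC_Nc v : nonsink n v -> phiTC R T v = Nc v (out v).
Proof.
move=> hv; rewrite /phiTC /Nc /out; case hr: (isR R v).
  by apply: eq_count => w; rewrite /adj /cell hr (isRC hr) /= andbF orbF.
apply: eq_count => w; rewrite /adj /cell hr /=.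
have hc : isC R v by rewrite isCE ?hr ?(nonsink_lt hv).
by rewrite hc.
Qed.

Lemma out_sink w : adj R 0 w -> out 0 w.
Proof.
move=> a; rewrite /out isR0 /ent inord0.
case/and4P: hT => _ /forallP /(_ (inord w)) h2 _ _.
have hw : w < n.+1 by case/andP: (adj_lt a).
move: h2; rewrite inordK // => /implyP; apply.
by move: a; rewrite adj_row ?isR0 // /cell isR0 /=.
Qed.

Lemma out_anti v w : adj R v w -> out w v = ~~ out v w.
Proof.
move=> a; case/andP: (adj_lt a) => hv hw; have := adj_RC a; rewrite /out.
case hr: (isR R v) => e.
  by rewrite (isCR (esym e)).
have : isR R w by rewrite -[isR R w]negbK -isCE // -e.
by move=> ->; rewrite negbK.
Qed.

Lemma EW_stable : stable R (phiTC R T).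
Proof.
move=> v hv; rewrite phiTC_Nc //; have hvn := nonsink_lt hv.
case hr: (isR R v).
  case/and4P: hT => _ _ /forallP /(_ (inord v)) h3 _.
  move: h3; rewrite inordK // hr /= => /implyP /(_ _) /existsP [].
    by move: hv; rewrite /nonsink; lia.
  move=> j /andP[c nT]; apply: (@Nc_lt_deg v j) => //; first exact: cell_adj.
  by rewrite /out hr /ent inord_val.
have hc : isC R v by rewrite isCE ?hr.
apply: (@Nc_lt_deg v 0) => //; first by rewrite adjC adj0.
rewrite /out hr negbK; have := out_sink (_ : adj R 0 v); rewrite /out isR0; apply.
by rewrite adj0.
Qed.

Variable L : nat -> nat.
Hypothesis hL : Lok L.
Hypothesis hlo : forall v, nonsink n v -> Nc v (fun w => L v < L w) <= phiTC R T v.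

Lemma EW_orient_aux m : forall v, v < n.+1 -> L v < m -> forall w, adj R v w -> out v w = (L v < L w).
Proof.
elim: m => [//|m IH] v hv hm w a.
case: (ltnP (L v) m) => hm'; first exact: IH.
case: (posnP v) => [v0|vp].
  move: a; rewrite v0 hL.1 => a; rewrite out_sink //.
  have hw : w < n.+1 by case/andP: (adj_lt a).
  have wp : 0 < w by case: (posnP w) a => // ->; rewrite adj0 (isRC isR0).
  by case: (hL.2 w) => //; rewrite /nonsink wp; lia.
have hvs : nonsink n v by rewrite /nonsink vp; lia.
have hlow : forall w, adj R v w -> L w < L v -> out v w = false.
  move=> w' a' lt; have hw' : w' < n.+1 by case/andP: (adj_lt a').
  have a'' : adj R w' v by rewrite adjC.
  have := IH w' hw' ltac:(lia) v a''; rewrite lt out_anti //.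
  by case: (out v w').
have hsub : Nc v (out v) <= Nc v (fun w => L v < L w).
  apply: Nc_monoA => w' a' o; case: (ltngtP (L v) (L w')) => // e.
    by rewrite hlow in o.
  by move: (Lok_adj_neq hL a'); rewrite e eqxx.
have heq : Nc v (out v) = Nc v (fun w => L v < L w) by have := hlo hvs; rewrite phiTC_Nc //; lia.
case: (ltngtP (L v) (L w)) => e.
- apply/negPn/negP => no.
  have := Nc_split v (fun w => L v < L w) (out v).
  have : Nc v (out v) <= Nc v (fun w => (L v < L w) && out v w).
    apply: Nc_monoA => w' a' o; rewrite o andbT; case: (ltngtP (L v) (L w')) => // e'.
      by rewrite hlow in o.
    by move: (Lok_adj_neq hL a'); rewrite e' eqxx.
  have := @Nc_pos v w (fun w => (L v < L w) && ~~ out v w) (proj2 (andP (adj_lt a))) a.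
  rewrite e no => /(_ isT) h1 h2 h3; rewrite h3 in heq; move: h1 h2 heq.
  set A := Nc v (fun w => (L v < L w) && ~~ out v w); set B := Nc v (fun w => (L v < L w) && out v w); set C := Nc v (out v); lia.
- exact: hlow.
- by move: (Lok_adj_neq hL a); rewrite e eqxx.
Qed.

Lemma EW_orient v w : v < n.+1 -> adj R v w -> out v w = (L v < L w).
Proof. by move=> hv; apply: (EW_orient_aux (m := (L v).+1)). Qed.

Lemma EW_T (i j : 'I_n.+1) : T (i, j) = cell R i j && (L i < L j).
Proof.
case c: (cell R i j); last first.
  case/and4P: hT => /forallP /(_ i) /forallP /(_ j) h1 _ _ _.
  by move: h1; rewrite c /= => /negbTE.
have := EW_orient (ltn_ord i) (cell_adj c); rewrite /out.
by case/and3P: c => -> _ _; rewrite /ent !inord_val.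
Qed.

Lemma EW_phi v : nonsink n v -> phiTC R T v = Nc v (fun w => L v < L w).
Proof.
move=> hv; rewrite phiTC_Nc //; apply: Nc_eq => w _ a; exact: EW_orient (nonsink_lt hv) a.
Qed.
End EW.

Lemma sumn_map_add (T0 : Type) (f g : T0 -> nat) s :
  sumn [seq f p + g p | p <- s] = sumn [seq f p | p <- s] + sumn [seq g p | p <- s].
Proof. by elim: s => //= p s ->; lia. Qed.

Lemma pairwise_rev (T0 : Type) (r : rel T0) s :
  pairwise r (rev s) = pairwise (fun x y => r y x) s.
Proof.
elim: s => // x s IH; rewrite rev_cons pairwise_rcons all_rev IH pairwise_cons.
by [].
Qed.

Lemma pairwise_filter_in (r0 r : rel nat) (P : pred nat) s :
  (forall x y, P x -> P y -> r0 x y -> r x y) -> pairwise r0 s -> pairwise r [seq x <- s | P x].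
Proof.
move=> h; elim: s => // x s IH; rewrite pairwise_cons => /andP[ax ps] /=.
case px: (P x); rewrite ?pairwise_cons ?IH ?andbT //.
rewrite all_filter; apply/allP => y ys; apply/implyP => py.
by apply: h => //; move/allP: ax; apply.
Qed.

Section PsiS.
Variable L : nat -> nat.
Hypothesis hL : Lok L.
Hypothesis hprev : forall v, nonsink n v -> exists w, [/\ w < n.+1, adj R v w & L w = (L v).-1].

Definition blk p := let s := [seq v <- iota 1 n | L v == p] in if odd p then s else rev s.
Definition piL := flatten [seq blk p | p <- iota 1 K].

Lemma count_blk (a : pred nat) p : count a (blk p) = count (fun v => a v && (L v == p)) (iota 1 n).
Proof. by rewrite /blk; case: (odd p); rewrite ?count_rev count_filter. Qed.

Lemma piL_perm : perm_eq piL (iota 1 n).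
Proof.
apply/permP => a; rewrite /piL count_flatten -map_comp.
rewrite (eq_map (fun p => count_blk a p)).
have : forall v, v \in iota 1 n -> 1 <= L v <= K.
  by move=> v /nonsink_iota hv; case: (hL.2 v hv) => -> -> _.
elim: (iota 1 n) => [|v s IH] hs /=.
  by elim: (iota 1 K) => //= p ps ->.
rewrite sumn_map_add IH; last by move=> w ws; apply: hs; rewrite in_cons ws orbT.
congr (_ + _); rewrite sumn_count.
case: (a v) => /=; last by rewrite (@eq_count _ _ pred0) ?count_pred0.
rewrite (@eq_count _ _ (pred1 (L v))); last by move=> p; rewrite /= eq_sym.
rewrite count_uniq_mem ?iota_uniq // mem_iota.
by have := hs v (mem_head _ _); lia.
Qed.

Definition kle x y := (L x < L y) || ((L x == L y) && (if odd (L x) then x < y else y < x)).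

Lemma mem_blk p v : (v \in blk p) = (L v == p) && (v \in iota 1 n).
Proof. by rewrite /blk; case: (odd p); rewrite ?mem_rev mem_filter. Qed.

Lemma piL_pairwise_gen m a : pairwise kle (flatten [seq blk p | p <- iota a m]).
Proof.
elim: m a => [//|m IH] a.
rewrite (_ : flatten [seq blk p | p <- iota a m.+1] = blk a ++ flatten [seq blk p | p <- iota a.+1 m]) //.
rewrite pairwise_cat IH andbT; apply/andP; split.
  apply/allrelP => x y; rewrite mem_blk => /andP[/eqP hx _] /flattenP [s /mapP [p hp ->]].
  rewrite mem_blk => /andP[/eqP hy _]; move: hp; rewrite mem_iota /kle hx hy => hp.
  by have -> : a < p by lia.
have hsrt : pairwise ltn (iota 1 n) by rewrite -sorted_pairwise ?iota_ltn_sorted //; exact: ltn_trans.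
rewrite /blk; case ha: (odd a).
  apply: pairwise_filter_in hsrt => x y /eqP hx /eqP hy lt.
  by rewrite /kle hx hy ltnn eqxx ha.
rewrite pairwise_rev; apply: pairwise_filter_in hsrt => x y /eqP hx /eqP hy lt.
by rewrite /kle hx hy ltnn eqxx ha.
Qed.

Lemma piL_pairwise : pairwise kle piL.
Proof. exact: piL_pairwise_gen. Qed.

Lemma size_piL : size piL = n.
Proof. by rewrite (perm_size piL_perm) size_iota. Qed.

Local Notation ell k := (L (nth 0 piL k)).

Lemma nth_ns k : k < n -> nonsink n (nth 0 piL k).
Proof.
move=> hk; apply: nonsink_iota; rewrite -(perm_mem piL_perm); apply: mem_nth.
by rewrite size_piL.
Qed.

Lemma kle_L x y : kle x y -> L x <= L y.
Proof. by rewrite /kle => /orP[/ltnW //|/andP[/eqP -> _]]. Qed.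

Lemma kle_nth i j : i < j -> j < n -> kle (nth 0 piL i) (nth 0 piL j).
Proof.
move=> ij jn; move/(pairwiseP 0): piL_pairwise; apply => //; rewrite inE size_piL //.
lia.
Qed.

Lemma ell_mono i j : i <= j -> j < n -> ell i <= ell j.
Proof.
rewrite leq_eqVlt => /orP[/eqP -> //|ij] jn; exact: kle_L (kle_nth ij jn).
Qed.

Lemma idx_ns w : nonsink n w -> index w piL < n /\ nth 0 piL (index w piL) = w.
Proof.
move=> hw; have wp : w \in piL by rewrite (perm_mem piL_perm) mem_iota; move: hw; rewrite /nonsink; lia.
by rewrite -size_piL index_mem nth_index.
Qed.

Lemma ns_of_L w : w < n.+1 -> 0 < L w -> nonsink n w.
Proof.
move=> hw; case: (posnP w) => [->|wp]; first by rewrite hL.1.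
by rewrite /nonsink wp; lia.
Qed.

Lemma ell_step k : k.+1 < n -> ell k.+1 <= (ell k).+1.
Proof.
move=> hk; rewrite leqNgt; apply/negP => lt.
have [w [hw a e]] := hprev (nth_ns hk).
have wn : nonsink n w by apply: ns_of_L => //; lia.
have [ji jw] := idx_ns wn.
case: (leqP (index w piL) k) => hj.
  by have := ell_mono hj (ltnW hk); rewrite jw e; lia.
by have := ell_mono hj ji; rewrite jw e; have := (hL.2 _ (nth_ns hk)); case; lia.
Qed.

Lemma ell0 : ell 0 = 1.
Proof.
have n0 := n_pos; have [Lp _ _] := hL.2 _ (nth_ns n0).
case: (leqP (ell 0) 1) => h; first lia.
have [w [hw a e]] := hprev (nth_ns n0).
have wn : nonsink n w by apply: ns_of_L => //; lia.
have [ji jw] := idx_ns wn.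
by have := ell_mono (leq0n _) ji; rewrite jw e; lia.
Qed.


Lemma asc k : k < n -> asc_top piL k = odd (ell k).
Proof.
case: k => [|k] hk; first by rewrite ell0.
rewrite /asc_top /=.
set x := nth 0 piL k; set y := nth 0 piL k.+1.
have kxy : kle x y := kle_nth (ltnSn k) hk.
case: (L x =P L y) => exy.
  move: kxy; rewrite /kle exy ltnn eqxx /=; case: (odd (L y)) => // yx.
  by apply/negbTE; rewrite -leqNgt ltnW.
have ey : L y = (L x).+1.
  have := ell_mono (leqnSn k) hk; have := ell_step hk; rewrite -/x -/y; lia.
have [w [hw a e]] := hprev (nth_ns hk); rewrite -/y ey /= in e.
have [Lxp _ _] := hL.2 _ (nth_ns (ltnW hk)); rewrite -/x in Lxp.
have wn : nonsink n w by apply: ns_of_L => //; lia.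
have [ji jw] := idx_ns wn.
have jk : index w piL <= k.
  rewrite leqNgt; apply/negP => lt; have := ell_mono lt ji; rewrite jw e -/y ey; lia.
have wx : if odd (L x) then w <= x else x <= w.
  move: jk; rewrite leq_eqVlt => /orP[/eqP ej|lt].
    have wxe : w = x by rewrite -jw ej.
    by rewrite wxe; case: (odd _).
  have := kle_nth lt (ltnW hk); rewrite jw -/x /kle e ltnn eqxx /=.
  by case: (odd _) => /ltnW.
have hy := nth_ns hk; rewrite -/y in hy.
have py := Lok_odd hL (nonsink_lt hy); rewrite ey /= in py.
rewrite ey /=; case ox: (odd (L x)) wx py => wx py /=.
  have hr : isR R y by rewrite -[isR R y]negbK -isCE ?(nonsink_lt hy) // -py.
  move: a; rewrite adj_row // => /andP[_ yw]; apply/negbTE; rewrite -leqNgt; lia.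
have hc : isC R y by rewrite -py.
move: a; rewrite adj_col // => /andP[_ wy]; lia.
Qed.

Lemma poslev_ell k : k < n -> poslev piL k = ell k.
Proof.
elim: k => [|k IH] hk; first by rewrite /poslev /= ell0.
move: (IH (ltnW hk)); rewrite /poslev (_ : iota 1 k.+1 = iota 1 k ++ [:: k.+1]); last by rewrite -[k.+1]addn1 iotaD /= add1n addn1.
rewrite count_cat /= addn0 => IHk.
rewrite (asc hk) (asc (ltnW hk)).
have := ell_mono (leqnSn k) hk; have := ell_step hk.
case: (ell k.+1 =P ell k) => e.
  by rewrite e eqxx addn0.
move=> h1 h2; have -> : ell k.+1 = (ell k).+1 by lia.
by rewrite /=; case: (odd _) => /=; lia.
Qed.

Lemma plev_L v : nonsink n v -> plev piL v = L v.
Proof.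
move=> hv; have [ji jw] := idx_ns hv.
rewrite /plev; case: eqP => [e|_]; first by move: hv; rewrite e.
by rewrite poslev_ell // jw.
Qed.

End PsiS.

Lemma count_col L (Q : pred nat) i : Lok L -> nonsink n i -> isC R i ->
  count (fun l => ~~ odd (L l) && Q l && (l < i)) (iota 0 n.+1) = Nc i Q.
Proof.
move=> hL hi hc; apply: eq_in_count => w; rewrite mem_iota add0n => hw.
rewrite adj_col // (Lok_odd hL hw) (isCE hw) negbK.
by case: (isR R w); case: (Q w); case: (w < i).
Qed.

Lemma count_row L (Q : pred nat) i : Lok L -> nonsink n i -> isR R i ->
  count (fun l => odd (L l) && Q l && (i < l)) (iota 0 n.+1) = Nc i Q.
Proof.
move=> hL hi hr; apply: eq_in_count => w; rewrite mem_iota add0n => hw.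
rewrite adj_row // (Lok_odd hL hw).
by case: (isC R w); case: (Q w); case: (i < w).
Qed.

Lemma isC_or v : nonsink n v -> isC R v = ~~ isR R v.
Proof. by move=> hv; rewrite isCE // nonsink_lt. Qed.

Lemma minrec_Nc c i : Lok (lev R c) -> nonsink n i ->
  minrec R c i = Nc i (fun w => lev R c i < lev R c w).
Proof.
move=> hL hi; rewrite /minrec (Lok_odd hL (nonsink_lt hi)).
case hc: (isC R i); first by rewrite count_col.
by rewrite count_row // -[isR R i]negbK -isC_or // hc.
Qed.

Lemma mu_Nc (L : nat -> nat) pi i : Lok L -> (forall j, j < n.+1 -> plev pi j = L j) -> nonsink n i ->
  mu n pi i = Nc i (fun w => L w == (L i).-1) /\ stable_bound n pi i = Nc i (fun w => L w < L i).
Proof.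
move=> hL hp hi; have hin := nonsink_lt hi.
rewrite /mu /stable_bound hp // (Lok_odd hL hin).
have e : forall (f : nat -> nat -> bool), count (fun j => f (plev pi j) j) (iota 0 n.+1) = count (fun j => f (L j) j) (iota 0 n.+1).
  by move=> f; apply: eq_in_count => j; rewrite mem_iota add0n => hj; rewrite hp.
rewrite (e (fun p j => ~~ odd p && (p == (L i).-1) && (j < i))).
rewrite (e (fun p j => ~~ odd p && (p < L i) && (j < i))).
rewrite (e (fun p j => odd p && (p == (L i).-1) && (i < j))).
rewrite (e (fun p j => odd p && (p < L i) && (i < j))).
case hc: (isC R i).
  by rewrite !count_col.
have hr : isR R i by rewrite -[isR R i]negbK -isC_or // hc.
by rewrite !count_row.
Qed.

Lemma Nc_ge_split L v : Lok L -> nonsink n v ->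
  Nc v (fun w => (L v).-1 <= L w) = Nc v (fun w => L v < L w) + Nc v (fun w => L w == (L v).-1).
Proof.
move=> hL hv; have [Lp _ _] := hL.2 v hv.
rewrite (Nc_split v _ (fun w => L v < L w)); congr (_ + _); apply: Nc_eq => w _ a.
  by apply/andP/idP => [[]//|h]; split => //; lia.
have hne : L v <> L w by move=> e; move: (Lok_adj_neq hL a); rewrite e eqxx.
apply/andP/idP => [[h1 h2]|/eqP h]; [apply/eqP; lia | split; lia].
Qed.

Lemma Lbnd_slack c L : Lok L ->
  (forall v, nonsink n v -> Nc v (fun w => L v < L w) <= c v /\
     c v < Nc v (fun w => L v < L w) + Nc v (fun w => L w == (L v).-1)) -> Lbnd c L.
Proof. by move=> hL h v hv; rewrite Nc_ge_split //; apply: h. Qed.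

Lemma prev_pos c L v : Lok L -> Lbnd c L -> nonsink n v -> 0 < Nc v (fun w => L w == (L v).-1).
Proof.
move=> hL hB hv; have [w [hw a e]] := Lbnd_prev hL hB hv.
by apply: (Nc_pos hw a); rewrite /= e.
Qed.

Lemma Lok_ext L L' : Lok L -> L' 0 = 0 -> (forall v, nonsink n v -> L' v = L v) -> Lok L'.
Proof. by move=> [h0 h] e0 e; split => // v hv; rewrite e //; apply: h. Qed.

Lemma Psi_piL T : Psi R T = piL (lev R (phiTC R T)).
Proof. by []. Qed.

Lemma ns_ord (i : 'I_n) : nonsink n i.+1.
Proof. by rewrite /nonsink ltn_ord. Qed.

Lemma ord_of_ns v : nonsink n v -> exists i : 'I_n, v = i.+1.
Proof.
move=> hv; have hv' : v.-1 < n by move: hv; rewrite /nonsink; lia.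
by exists (Ordinal hv'); rewrite /= prednK //; case/andP: hv.
Qed.

Lemma main_fwd T a : RecEW R T a -> canon_decperm (Psi R T) a.
Proof.
case=> x [hRec hpick ha].
have [st nf] := Rec_noFSC hRec.
have hK := alltop st nf; have hL := fwd_Lok st hK; have hB := fwd_Lbnd st hK.
set L := lev R x in hK hL hB.
have mrec v : nonsink n v -> minrec R x v = Nc v (fun w => L v < L w) by move=> hv; rewrite minrec_Nc.
move: hpick; rewrite /phiCT; case: pickP => // T' /andP[hEW /forallP hphi] [eT]; subst T'.
have hphiv v : nonsink n v -> phiTC R T v = Nc v (fun w => L v < L w).
  by move=> hv; have [i ->] := ord_of_ns hv; rewrite (eqP (hphi i)) mrec // ns_ord.
have hprev := Lbnd_prev hL hB.
have hBT : Lbnd (phiTC R T) L.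
  apply: Lbnd_slack => // v hv; rewrite hphiv //; split => //.
  by have := prev_pos hL hB hv; lia.
have hlevT v : nonsink n v -> lev R (phiTC R T) v = L v by move=> hv; exact: char_lev hL hBT v hv.
have -> : Psi R T = piL L.
  rewrite Psi_piL /piL /blk; congr flatten; apply: eq_map => p.
  by rewrite (@eq_in_filter _ _ (fun v => L v == p)) // => v /nonsink_iota hv; rewrite hlevT.
have hpl : forall j, j < n.+1 -> plev (piL L) j = L j.
  move=> j hj; case: (posnP j) => [->|jp]; first by rewrite /plev.
  by apply: plev_L => //; rewrite /nonsink jp; lia.
split; first split.
- exact: piL_perm hL.
- move=> i; have hi := ns_ord i; have [_ ->] := mu_Nc hL hpl hi.
  rewrite ha mrec //; have := hB _ hi; rewrite Nc_ge_split //.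
  have : Nc i.+1 (fun w => L w == (L i.+1).-1) <= Nc i.+1 (fun w => L w < L i.+1).
    by apply: Nc_mono => w /eqP ->; have [Lp _ _] := hL.2 _ hi; lia.
  move=> h1 [h2 h3]; split; lia.
- move=> i; have hi := ns_ord i; have [-> _] := mu_Nc hL hpl hi.
  rewrite ha mrec //; have := hB _ hi; rewrite Nc_ge_split //.
  move=> [h2 h3]; lia.
Qed.

Lemma main_bwd T a : EWtab R T -> canon_decperm (Psi R T) a -> RecEW R T a.
Proof.
move=> hT [[hperm hbnd] hmu].
set c := phiTC R T; have st : stable R c := EW_stable hT.
set L := lev R c.
have hK : forall v, nonsink n v -> L v <= K.
  move=> v hv; have : v \in Psi R T.
    by rewrite (perm_mem hperm) mem_iota; move: hv; rewrite /nonsink; lia.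
  rewrite Psi_piL -/c -/L => /flattenP [s /mapP [p hp ->]].
  by rewrite mem_blk => /andP[/eqP -> _]; move: hp; rewrite mem_iota; lia.
have hL : Lok L := fwd_Lok st hK; have hB : Lbnd c L := fwd_Lbnd st hK.
have hprev := Lbnd_prev hL hB.
have hc v : nonsink n v -> c v = Nc v (fun w => L v < L w).
  by move=> hv; exact: (EW_phi hT hL (fun u hu => proj1 (hB u hu)) hv).
have hpl : forall j, j < n.+1 -> plev (Psi R T) j = L j.
  move=> j hj; case: (posnP j) => [->|jp]; first by rewrite /plev.
  by rewrite Psi_piL; apply: plev_L => //; rewrite /nonsink jp; lia.
pose b v := oapp (fun i : 'I_n => `|a i|%N) 0 (insub v.-1).
have hb (i : 'I_n) : b i.+1 = `|a i|%N.
  by rewrite /b /= (valK i).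
pose xa : conf := fun v => c v + b v.
have hxa : forall v, nonsink n v -> Nc v (fun w => L v < L w) <= xa v /\
     xa v < Nc v (fun w => L v < L w) + Nc v (fun w => L w == (L v).-1).
  move=> v hv; have [i ei] := ord_of_ns hv; rewrite /xa hc // ei hb.
  have [hmu' _] := mu_Nc hL hpl (ns_ord i); have := hmu i; rewrite hmu' -ei.
  have := (hbnd i).1; lia.
have hBx : Lbnd xa L by apply: Lbnd_slack.
have hlx v : nonsink n v -> lev R xa v = L v by move=> hv; exact: char_lev hL hBx v hv.
have hLx : Lok (lev R xa) by apply: Lok_ext hL _ hlx.
have hm v : nonsink n v -> minrec R xa v = c v.
  move=> hv; rewrite minrec_Nc // hc // hlx //; apply: Nc_eq => w hw _.
  case: (posnP w) => [->|wp]; first by rewrite lev0 (proj1 hL).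
  by rewrite hlx // /nonsink wp; lia.
exists xa; split.
- split; first by move=> v hv; have := hxa v hv; have := Nc_le v (fun w => (L v).-1 <= L w);
    rewrite Nc_ge_split //; lia.
  have := reach_x hL (fun v hv => proj1 (hxa v hv)); case=> d r e; by exists d.
- rewrite /phiCT; case: pickP => [T' /andP[hT' /forallP hphi]|hnone].
    congr Some; apply/ffunP => -[i j].
    have hlo' : forall v, nonsink n v -> Nc v (fun w => L v < L w) <= phiTC R T' v.
      move=> v hv; have [k ->] := ord_of_ns hv; rewrite (eqP (hphi k)) hm ?ns_ord //.
      by rewrite hc ?ns_ord.
    by rewrite (EW_T hT' hL hlo') (EW_T hT hL (fun u hu => proj1 (hB u hu))).
  have := hnone T; rewrite hT /=; move/negbT => /forallPn [k].
  by rewrite hm ?ns_ord // eqxx.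
- move=> i; rewrite hm ?ns_ord // /xa hb; have := (hbnd i).1; lia.
Qed.
End S.

Unset Implicit Arguments.

Theorem corollary5p5 (n : nat) (R : {set 'I_n.+1}) (T : tab n) (a : 'I_n -> int) :
  ferrers R -> EWtab R T ->
  (RecEW R T a <-> @canon_decperm n (Psi R T) a).
Proof.
move=> hF hT; split; first exact: main_fwd.
exact: main_bwd.
Qed.
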